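(* Let $(\mathfrak g,d,[\,,\,])$ be a differential graded Lie algebra and $\eta:\mathfrak g\to\mathfrak g[-1]$ any linear map. Let $(\mathfrak g,\mu_* )$ be the $L_\infty$-algebra given by $\mu_1=d$, $\mu_2(v_1,v_2)=(d\eta+\eta d)[v_1,v_2]$ and, for $n\ge3$, $\mu_n(v_1,\dots,v_n)=(-1)^n\sum_{\sigma\in Sh(n-1,n)}(-1)^{\tilde\sigma}e(\sigma)\,\eta[\mu_{n-1}(v_{\sigma(1)},\dots,v_{\sigma(n-1)}),v_{\sigma(n)}]$. Then the Kuranishi map $K$ with components $$K_1(v_1)=v_1,\qquad K_2(v_1,v_2)=\eta[v_1,v_2],\qquad K_n=0\ \ (n\ge3)$$ is an $L_\infty$-isomorphism from $(\mathfrak g,\mu_* )$ to the differential abelian Lie algebra $(\mathfrak g,d,0)$.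
   Context: For a $\mathbb Z$-graded vector space $\mathfrak g$, $\mathfrak g[n]$ is the shift with $(\mathfrak g[n])^i=\mathfrak g^{i+n}$; $\tilde v$ is the parity of the degree of homogeneous $v$. $Sh(k,n)$ is the set of permutations $\sigma$ of $\{1,\dots,n\}$ with $\sigma(1)<\dots<\sigma(k)$ and $\sigma(k+1)<\dots<\sigma(n)$; $\tilde\sigma$ is its parity and the Koszul sign $e(\sigma)$ is defined by $v_{\sigma(1)}\wedge\dots\wedge v_{\sigma(n)}=(-1)^{\tilde\sigma}e(\sigma)v_1\wedge\dots\wedge v_n$. An $L_\infty$-algebra is a graded space with maps $\mu_k:\Lambda^k\mathfrak g\to\mathfrak g[2-k]$ satisfying, for all $n\ge1$, $\sum_{k+l=n+1}\sum_{\sigma\in Sh(k,n)}(-1)^{\tilde\sigma+k(l-1)}e(\sigma)\mu_l(\mu_k(v_{\sigma(1)},\dots,v_{\sigma(k)}),v_{\sigma(k+1)},\dots,v_{\sigma(n)})=0$. A differential abelian Lie algebra $(\mathfrak g',d',0)$ is the $L_\infty$-algebra with $\mu'_1=d'$ and $\mu'_n=0$ for $n\ge2$. An $L_\infty$-morphism from an $L_\infty$-algebra $(\mathfrak g,\mu_* )$ to a differential abelian Lie algebra $(\mathfrak g',d',0)$ is a family of linear maps $F_n:\Lambda^n\mathfrak g\to\mathfrak g'[1-n]$, $n\ge1$, such that for all $n\ge1$ and all $v_1,\dots,v_n$, $$d'F_n(v_1,\dots,v_n)=\sum_{k+l=n+1}\sum_{\sigma\in Sh(k,n)}(-1)^{\tilde\sigma+k(l-1)}e(\sigma)\,F_l\big(\mu_k(v_{\sigma(1)},\dots,v_{\sigma(k)}),v_{\sigma(k+1)},\dots,v_{\sigma(n)}\big).$$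 It is an $L_\infty$-isomorphism if $F_1:\mathfrak g\to\mathfrak g'$ is an isomorphism of graded vector spaces. *)

(* Defs.v *)
From HB Require Import structures.
From mathcomp Require Import all_boot all_order all_algebra all_fingroup.
Set Implicit Arguments.
Unset Strict Implicit.
Unset Printing Implicit Defensive.
Import Order.TTheory GRing.Theory Num.Theory.
Local Open Scope ring_scope.

(* A Z-graded vector space g is modelled as a K-vector space V together with
   the family of its homogeneous components G i = g^i (subspaces of V) such
   that V is their direct sum.  A homogeneous element "with its degree" is a
   pair (i, v) with v \in G i. *)

Definition par (i : int) : bool := odd `|i|%N.
Definition sgn {K : fieldType} (b : bool) : K := (-1) ^+ b.

Section Defs.
Variables (K : fieldType) (V : lmodType K).

Definition hnth (s : seq (int * V)) (i : nat) : int * V := nth (0%Z, 0) s i.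

Definition hom_seq (G : int -> {pred V}) (s : seq (int * V)) : bool :=
  all (fun p => p.2 \in G p.1) s.

Definition degsum (s : seq (int * V)) : int := \sum_(p <- s) p.1.

Definition graded_space (G : int -> {pred V}) : Prop :=
  [/\ forall i, 0 \in G i,
      forall i (a : K) x y, x \in G i -> y \in G i -> a *: x + y \in G i,
      forall v : V, exists s : seq (int * V),
         [/\ uniq (map fst s), hom_seq G s & v = \sum_(p <- s) p.2] &
      forall s : seq (int * V), uniq (map fst s) -> hom_seq G s ->
         \sum_(p <- s) p.2 = 0 -> all (fun p => p.2 == 0) s].

(* f : g -> g[k], i.e. f maps g^i into g^(i+k) *)
Definition has_degree (G : int -> {pred V}) (f : V -> V) (k : int) : Prop :=
  forall i x, x \in G i -> f x \in G (i + k).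

Definition is_dgla (G : int -> {pred V}) (d : V -> V) (br : V -> V -> V) : Prop :=
  has_degree G d 1 /\
  (forall x, d (d x) = 0) /\
  (forall i j x y, x \in G i -> y \in G j -> br x y \in G (i + j)) /\
  (forall (a : K) x y z, br (a *: x + y) z = a *: br x z + br y z) /\
  (forall (a : K) x y z, br z (a *: x + y) = a *: br z x + br z y) /\
  (forall i j x y, x \in G i -> y \in G j ->
     br x y = - (sgn (par i && par j) *: br y x)) /\
  (forall i j k x y z, x \in G i -> y \in G j -> z \in G k ->
     br x (br y z) = br (br x y) z + sgn (par i && par j) *: br y (br x z)) /\
  (forall i j x y, x \in G i -> y \in G j ->
     d (br x y) = br (d x) y + sgn (par i) *: br x (d y)).

(* (k,n)-unshuffles: sigma(1)<..<sigma(k), sigma(k+1)<..<sigma(n) *)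
Definition shuffle (n k : nat) (s : {perm 'I_n}) : bool :=
  [forall i : 'I_n, forall j : 'I_n,
     ((i < j)%N && ((j < k)%N || (k <= i)%N)) ==> (s i < s j)%N].

Definition pseq (s : seq (int * V)) (sg : {perm 'I_(size s)}) : seq (int * V) :=
  [seq hnth s (sg i) | i <- enum 'I_(size s)].
Arguments pseq : clear implicits.

Definition koszul (s : seq (int * V)) (sg : {perm 'I_(size s)}) : K :=
  \prod_(i < size s) \prod_(j < size s | (i < j)%N && (sg j < sg i)%N)
     sgn (par (hnth s (sg i)).1 && par (hnth s (sg j)).1).
Arguments koszul : clear implicits.

Definition shsign (s : seq (int * V)) (sg : {perm 'I_(size s)}) : K :=
  sgn (odd_perm sg) * koszul s sg.
Arguments shsign : clear implicits.

Fixpoint mu_rec (d eta : V -> V) (br : V -> V -> V) (n : nat)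
    (s : seq (int * V)) : V :=
  match n with
  | 0 => 0
  | 1 => d (hnth s 0).2
  | 2 => d (eta (br (hnth s 0).2 (hnth s 1).2))
         + eta (d (br (hnth s 0).2 (hnth s 1).2))
  | m.+1 =>
      (-1) ^+ m.+1 *:
      \sum_(sg : {perm 'I_(size s)} | shuffle m sg)
         shsign s sg *: eta (br (mu_rec d eta br m (take m (pseq s sg)))
                                (hnth (pseq s sg) m).2)
  end.

Definition mu d eta br (s : seq (int * V)) : V := mu_rec d eta br (size s) s.

(* The Kuranishi map: K_1 = id, K_2 = eta [ , ], K_n = 0 otherwise.
   F_n(v_1,..,v_n) is written F [:: v_1; ...; v_n]. *)
Definition kuranishi (eta : V -> V) (br : V -> V -> V) (s : seq V) : V :=
  match s with
  | [:: x] => x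
  | [:: x; y] => eta (br x y)
  | _ => 0
  end.

Definition linfty_morphism_to_abelian (G : int -> {pred V})
    (mu : seq (int * V) -> V) (d' : V -> V) (F : seq V -> V) : Prop :=
  [/\
      forall (l r : seq V) (a : K) x y,
        F (l ++ (a *: x + y) :: r) = a *: F (l ++ x :: r) + F (l ++ y :: r),
      (* graded antisymmetric, i.e. defined on Lambda^n g *)
      forall (l r : seq V) i j x y, x \in G i -> y \in G j ->
        F (l ++ x :: y :: r) = - (sgn (par i && par j) *: F (l ++ y :: x :: r)),
      forall s, hom_seq G s -> (0 < size s)%N ->
        F (map snd s) \in G (degsum s + 1 - (size s)%:Z) &
      forall s, hom_seq G s -> (0 < size s)%N ->
        d' (F (map snd s)) =
        \sum_(k < size s) \sum_(sg : {perm 'I_(size s)} | shuffle k.+1 sg)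
           (shsign s sg * sgn (odd (k.+1 * (size s - k.+1)))) *:
           F (mu (take k.+1 (pseq s sg)) :: map snd (drop k.+1 (pseq s sg)))].

Definition linfty_iso_to_abelian (G : int -> {pred V})
    (mu : seq (int * V) -> V) (d' : V -> V) (F : seq V -> V) : Prop :=
  linfty_morphism_to_abelian G mu d' F /\ bijective (fun v => F [:: v]).

End Defs.

(* Main.v *)
Require Import Defs.
From HB Require Import structures.
From mathcomp Require Import all_boot all_order all_algebra all_fingroup.
From mathcomp Require Import zify.
Import GRing.Theory.
Local Open Scope ring_scope.

Lemma par_add1 (i : int) : par (i + 1) = ~~ par i.
Proof.
rewrite /par; case: i => n /=.
  by rewrite addn1 /=.
case: n => [|n] //.
rewrite NegzE.
have -> : - (n.+2)%:Z + 1 = - (n.+1)%:Z.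
 rewrite -addn1. rewrite PoszD opprD addrK. done.
by rewrite abszN /= negbK.
Qed.

Lemma shuffle_full n (sg : {perm 'I_n}) : shuffle n sg -> sg = 1%g.
Proof.
move=> /forallP H.
have mono : forall i j : 'I_n, (i < j)%N -> (sg i < sg j)%N.
  move=> i j lij; have /forallP := H i => /(_ j) /implyP; apply.
  by rewrite lij ltn_ord.
have ge : forall (f : {perm 'I_n}), (forall i j : 'I_n, (i < j)%N -> (f i < f j)%N) ->
   forall i : 'I_n, (i <= f i)%N.
  move=> f fm [m Hm]; elim: m Hm => [|m IH] Hm //=.
  have Hm' : (m < n)%N by apply: ltnW.
  have := fm (Ordinal Hm') (Ordinal Hm) (ltnSn m).
  by move/(leq_ltn_trans (IH Hm')).
have monoV : forall i j : 'I_n, (i < j)%N -> ((sg^-1)%g i < (sg^-1)%g j)%N.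
  move=> i j lij; rewrite ltnNge; apply/negP => le.
  move: le; rewrite leq_eqVlt => /orP[/eqP/val_inj E|lt].
    by move: lij; rewrite -(permKV sg i) -(permKV sg j) E ltnn.
  by have := mono _ _ lt; rewrite !permKV ltnNge ltnW.
apply/permP => i; rewrite perm1.
have := ge _ mono ((sg^-1)%g i); rewrite permKV => h1.
have h2 := ge _ monoV i.
have E : (sg^-1)%g i = i by apply/val_inj/eqP; rewrite eqn_leq h1 h2.
by rewrite -{1}E permKV.
Qed.
Section S.
Variables (K : fieldType) (V : lmodType K).
Implicit Types s : seq (int * V).

Lemma pseq1 s : pseq (1%g : {perm 'I_(size s)}) = s.
Proof.
rewrite /pseq.
have -> : [seq hnth s ((1%g : {perm 'I_(size s)}) i) | i <- enum 'I_(size s)]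
   = [seq nth (0%Z, 0) s k | k <- [seq val i | i <- enum 'I_(size s)]].
  by rewrite -map_comp; apply: eq_map => i; rewrite perm1.
by rewrite val_enum_ord -/(mkseq _ _) mkseq_nth.
Qed.

Lemma size_pseq s (sg : {perm 'I_(size s)}) : size (pseq sg) = size s.
Proof. by rewrite /pseq size_map size_enum_ord. Qed.

Lemma shsign1 s : shsign (1%g : {perm 'I_(size s)}) = 1 :> K.
Proof.
rewrite /shsign odd_perm1 /sgn expr0 mul1r /koszul.
apply: big1 => i _; apply: big1 => j; rewrite !perm1 => /andP[a b].
by move: (ltn_trans a b); rewrite ltnn.
Qed.

Lemma perm2 (sg : {perm 'I_2}) : sg = 1%g \/ sg = tperm ord0 (ord_max : 'I_2).
Proof.
have [e0|e0] : sg ord0 = ord0 \/ sg ord0 = ord_max.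
  by case: (sg ord0) => [[|[|m]] Hm] //; [left|right]; apply/val_inj.
- left; apply/permP => i; rewrite perm1.
  case: i => [[|[|m]] Hm] //.
  + by have -> : Ordinal Hm = ord0 by apply/val_inj.
  + have : sg (Ordinal Hm) != sg ord0 by rewrite (inj_eq perm_inj).
    rewrite e0; case: (sg (Ordinal Hm)) => [[|[|k]] Hk] //= _; by apply/val_inj.
- right; apply/permP => i.
  case: i => [[|[|m]] Hm] //.
  + have -> : Ordinal Hm = ord0 by apply/val_inj.
    by rewrite e0 tpermL.
  + have -> : Ordinal Hm = ord_max by apply/val_inj.
    rewrite tpermR.
    have : sg ord_max != sg ord0 by rewrite (inj_eq perm_inj).
    rewrite e0; case: (sg ord_max) => [[|[|k]] Hk] //= _; by apply/val_inj.
Qed.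

Lemma shuffle1_2 (sg : {perm 'I_2}) : shuffle 1 sg.
Proof.
apply/forallP => i; apply/forallP => j; apply/implyP.
by case: i j => [[|[|?]] ?] [[|[|?]] ?].
Qed.

Lemma pseq2 (x y : int * V) (sg : {perm 'I_(size [:: x; y])}) :
  pseq sg = [:: hnth [:: x; y] (sg ord0); hnth [:: x; y] (sg ord_max)].
Proof.
rewrite /pseq /= enum_ordSl /= enum_ordSl enum_ord0 /=.
by congr [:: _; hnth _ (sg _)]; apply/val_inj.
Qed.


Lemma shuffle_id n k : shuffle k (1%g : {perm 'I_n}).
Proof.
by apply/forallP => i; apply/forallP => j; apply/implyP => /andP[h _]; rewrite !perm1.
Qed.

Lemma top_term (F : seq V -> V) (m : seq (int * V) -> V) s :
  \sum_(sg : {perm 'I_(size s)} | shuffle (size s) sg)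
     (shsign sg * sgn (odd (size s * (size s - size s)))) *:
     F (m (take (size s) (pseq sg)) :: map snd (drop (size s) (pseq sg)))
  = F [:: m s].
Proof.
rewrite (eq_bigl (fun sg => sg == 1%g)); last first.
  by move=> sg; apply/idP/eqP => [/shuffle_full|->] //; apply: shuffle_id.
rewrite big_pred1_eq shsign1 pseq1 subnn muln0 /sgn /= expr0 mulr1 scale1r.
by rewrite take_size drop_size.
Qed.



Lemma tperm_neq1 : tperm ord0 (ord_max : 'I_2) != 1%g.
Proof. by apply/eqP => /permP/(_ ord0); rewrite tpermL perm1. Qed.

Lemma sum_perm2 (f : {perm 'I_2} -> V) :
  \sum_(sg : {perm 'I_2}) f sg = f 1%g + f (tperm ord0 ord_max).
Proof.
rewrite (bigD1 1%g) //= (bigD1 (tperm ord0 ord_max)) /=; last by rewrite tperm_neq1.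
rewrite big1 ?addr0 // => sg /andP[h1 h2].
by case: (perm2 sg) => E; rewrite E eqxx in h1 h2.
Qed.

Lemma shsign_t2 (x y : int * V) :
  shsign (s := [:: x; y]) (tperm ord0 ord_max) = - sgn (par y.1 && par x.1).
Proof.
rewrite /shsign odd_tperm /koszul /= big_ord_recr big_ord1 /=.
set a := widen_ord _ _; have -> : a = ord0 by apply/val_inj.
rewrite tpermL tpermR !big_mkcond !big_ord_recr !big_ord0 /= tpermR /=.
rewrite big_pred0; last by case => [[|[|?]] ?].
by rewrite /sgn expr1 !mul1r mulr1 mulN1r.
Qed.

Lemma addL1 (a b c : V) : c = -a - b + (c + (a + b)).
Proof. by rewrite addrCA -opprD addNr addr0. Qed.

Lemma addL2 (a b c : V) : c = -a + b + (c + (a - b)).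
Proof. by rewrite addrCA (addrC (-a) b) -opprB addNr addr0. Qed.


Lemma kur3 (eta : V -> V) br (a : V) l : (2 <= size l)%N -> kuranishi eta br (a :: l) = 0.
Proof. by case: l => [|? [|? ?]]. Qed.

Lemma mu_step (d eta : V -> V) br m s :
  mu_rec d eta br m.+3 s = (-1) ^+ m.+3 *:
      \sum_(sg : {perm 'I_(size s)} | shuffle m.+2 sg)
         shsign sg *: eta (br (mu_rec d eta br m.+2 (take m.+2 (pseq sg)))
                                (hnth (pseq sg) m.+2).2).
Proof. by []. Qed.

Lemma mid_term (d eta : V -> V) br x1 x2 x3 s' :
 \sum_(sg : {perm 'I_(size [:: x1, x2, x3 & s'])} | shuffle (size s').+2 sg)
   (shsign sg * sgn (odd ((size s').+2 * (size [:: x1, x2, x3 & s'] - (size s').+2)))) *: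
   kuranishi eta br (mu d eta br (take (size s').+2 (pseq sg))
        :: map snd (drop (size s').+2 (pseq sg)))
 = - (mu d eta br [:: x1, x2, x3 & s']).
Proof.
rewrite /mu [size [:: x1, x2, x3 & s']]/= mu_step.
rewrite exprS mulN1r scaleNr scaler_sumr opprK.
apply: eq_bigr => sg _.
have Hp := size_pseq [:: x1, x2, x3 & s'] sg.
rewrite (drop_nth (0%Z, 0)) ?Hp // drop_oversize ?Hp //.
rewrite size_take Hp ltnSn subSS subSS subSnn muln1 /sgn signr_odd.
by rewrite scalerA mulrC.
Qed.

End S.
Theorem theorem3p2 (K : fieldType) (V : lmodType K) (G : int -> {pred V})
    (d eta : {linear V -> V}) (br : V -> V -> V) :
  graded_space G -> is_dgla G d br -> has_degree G eta (-1) ->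
  linfty_iso_to_abelian G (mu d eta br) d (kuranishi eta br).
Proof.
move=> Hgr [Hd [dd [brdeg [brl [brr [anti [jac leib]]]]]]] Hetadeg.
have [G0 Glin _ _] := Hgr.
split; last by exists id.
split.
- move=> l r a x y.
  case: l => [|w [|w' l]]; case: r => [|z [|z' r]] /=;
    rewrite ?scaler0 ?addr0 //; try by case: l => [|? ?] /=; rewrite ?scaler0 ?addr0.
  + by rewrite brl linearD linearZ.
  + by rewrite brr linearD linearZ.
- move=> l r i j x y xi yj.
  case: l => [|w [|w' l]]; case: r => [|z r] /=; rewrite ?scaler0 ?oppr0 //;
    try by case: l => [|? ?] /=; rewrite ?scaler0 ?oppr0.
  by rewrite (anti i j x y xi yj) linearN linearZ.
- move=> s hs; case: s hs => [|[i1 v1] [|[i2 v2] [|x3 s']]] hs //= _.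
  + by move: hs => /andP[h _]; rewrite /degsum big_seq1 /= addrK.
  + move: hs => /andP[h1 /andP[h2 _]]; rewrite /degsum !big_cons big_nil /= addr0.
    rewrite -addrA (_ : 1 - 2%:Z = -1) //.
    by apply: Hetadeg; apply: brdeg.
- move=> s hs; case: s hs => [|[i1 v1] [|[i2 v2] [|x3 s']]] hs _ //.
  + rewrite big_ord1 (top_term _ _ (kuranishi eta br) (mu d eta br) ([:: (i1, v1)])).
    by [].
  + rewrite big_ord_recr big_ord1.
    rewrite (top_term _ _ (kuranishi eta br) (mu d eta br) ([:: (i1, v1); (i2, v2)])).
    rewrite (eq_bigl (fun _ => true)); last by move=> sg; apply: shuffle1_2.
    rewrite sum_perm2 shsign1 pseq1 shsign_t2 pseq2 tpermL tpermR /=.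
    move: hs => /andP[h1 /andP[h2 _]].
    rewrite /mu /= (leib i1 i2 v1 v2 h1 h2) (anti (i2+1) i1 (d v2) v1 (Hd _ _ h2) h1).
    rewrite par_add1 !linearD !linearZ !linearN /=.
    case: (par i1); case: (par i2); rewrite /sgn /= ?expr0 ?expr1 ?mul1r ?mulr1 ?mulN1r ?opprK ?scaleNr ?scale1r ?opprK ?scaleN1r ?opprK ?mul1r ?mulN1r ?scaleN1r ?opprK.
    1-4: first [exact: (addL1 _ _ (eta (br (d v1) v2)) (eta (br v1 (d v2))) (d (eta (br v1 v2))))
               |exact: (addL2 _ _ (eta (br (d v1) v2)) (eta (br v1 (d v2))) (d (eta (br v1 v2))))].
  + set s := [:: _, _, _ & _].
    rewrite big_ord_recr (top_term _ _ (kuranishi eta br) (mu d eta br) s).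
    rewrite big_ord_recr (mid_term _ _ d eta br).
    rewrite big1 ?add0r.
      by rewrite /= add0r addNr linear0.
    move=> k _; apply: big1 => sg _.
    rewrite kur3 ?scaler0 // size_map size_drop size_pseq.
    case: k => k hk /=; move: hk; rewrite -/(size s'); lia.
Qed.
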